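(* Let $G=\langle c,d\mid c^2=d^3\rangle$ be the fundamental group of the complement of the $(2,3)$-torus knot (trefoil) in $S^3$. If $\alpha,\beta\in G$ are conjugate in $G$ and $G=\langle\alpha,\beta\rangle$, then $\alpha$ and $\beta$ are peripheral.
   Context: An element of a knot group $\pi_1(S^3\smallsetminus K)$ is peripheral if it lies in a conjugate of the peripheral subgroup, i.e. the image of $\pi_1$ of the boundary torus of the knot exterior. *)

(* Defs.v *)
Record group (T : Type) : Type := Group {
  gmul : T -> T -> T;
  ginv : T -> T;
  gone : T;
  gmulA : forall x y z, gmul x (gmul y z) = gmul (gmul x y) z;
  gmul1g : forall x, gmul gone x = x;
  gmulVg : forall x, gmul (ginv x) x = gone
}.
Arguments gmul {T} _ _ _.
Arguments ginv {T} _ _.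
Arguments gone {T} _.

Definition is_hom {G H : Type} (SG : group G) (SH : group H) (f : G -> H) : Prop :=
  forall x y, f (gmul SG x y) = gmul SH (f x) (f y).

Definition trefoil_presentation {G : Type} (SG : group G) (c d : G) : Prop :=
  gmul SG c c = gmul SG d (gmul SG d d) /\
  forall (H : Type) (SH : group H) (h1 h2 : H),
    gmul SH h1 h1 = gmul SH h2 (gmul SH h2 h2) ->
    (exists f : G -> H, is_hom SG SH f /\ f c = h1 /\ f d = h2) /\
    (forall f g : G -> H, is_hom SG SH f -> is_hom SG SH g ->
       f c = g c -> f d = g d -> forall x, f x = g x).

Inductive in_gen {G : Type} (SG : group G) (a b : G) : G -> Prop :=
  | gen_one : in_gen SG a b (gone SG)
  | gen_a : in_gen SG a b a
  | gen_b : in_gen SG a b b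
  | gen_mul : forall x y, in_gen SG a b x -> in_gen SG a b y ->
              in_gen SG a b (gmul SG x y)
  | gen_inv : forall x, in_gen SG a b x -> in_gen SG a b (ginv SG x).

Definition generates {G : Type} (SG : group G) (a b : G) : Prop :=
  forall x, in_gen SG a b x.

Definition conjugate {G : Type} (SG : group G) (x y : G) : Prop :=
  exists g, y = gmul SG (gmul SG g x) (ginv SG g).

(* For the trefoil with c = aba, d = ab (Wirtinger generators a, b), the
   meridian is a = d^-1 c and the (Seifert) longitude is c^2 * meridian^-6. *)
Definition meridian {G : Type} (SG : group G) (c d : G) : G :=
  gmul SG (ginv SG d) c.

Fixpoint npow {G : Type} (SG : group G) (n : nat) (x : G) : G :=
  match n with
  | O => gone SG
  | S n => gmul SG x (npow SG n x)
  end.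

Definition longitude {G : Type} (SG : group G) (c d : G) : G :=
  gmul SG (gmul SG c c) (ginv SG (npow SG 6 (meridian SG c d))).

(* peripheral subgroup = <meridian, longitude> = image of pi_1 of the
   boundary torus; an element is peripheral if it lies in a conjugate of it *)
Definition peripheral {G : Type} (SG : group G) (c d : G) (x : G) : Prop :=
  exists g y, in_gen SG (meridian SG c d) (longitude SG c d) y /\
              x = gmul SG (gmul SG g y) (ginv SG g).

(* Main.v *)
Require Import Defs.
From Stdlib Require Import ZArith Lia List ProofIrrelevance.
Open Scope Z_scope.
Arguments gmulA {T} _ _ _ _.
Arguments gmul1g {T} _ _.
Arguments gmulVg {T} _ _.

Section GL.
Context {T : Type} (S : group T).
Local Notation "x * y" := (gmul S x y).
Local Notation "x ^-1" := (ginv S x) (at level 3).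
Local Notation e := (gone S).

Lemma gmulgV x : x * x^-1 = e.
Proof.
  transitivity ((x^-1^-1 * x^-1) * (x * x^-1)).
  - rewrite gmulVg, gmul1g. reflexivity.
  - rewrite <- gmulA, (gmulA S (ginv S x) x), gmulVg, gmul1g. apply gmulVg.
Qed.

Lemma gmulg1 x : x * e = x.
Proof. rewrite <- (gmulVg S x), gmulA, gmulgV, gmul1g. reflexivity. Qed.

Lemma gKl x y : x^-1 * (x * y) = y.
Proof. rewrite gmulA, gmulVg, gmul1g. reflexivity. Qed.
Lemma gKr x y : x * (x^-1 * y) = y.
Proof. rewrite gmulA, gmulgV, gmul1g. reflexivity. Qed.

Lemma inv_uniq x y : y * x = e -> y = x^-1.
Proof. intro H. rewrite <- (gmulg1 y), <- (gmulgV x), gmulA, H, gmul1g. reflexivity. Qed.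

Lemma ginv_mul x y : (x * y)^-1 = y^-1 * x^-1.
Proof. symmetry. apply inv_uniq. rewrite <- gmulA, (gmulA S (ginv S x) x), gmulVg, gmul1g, gmulVg. reflexivity. Qed.

Lemma ginv_inv x : x^-1^-1 = x.
Proof. symmetry. apply inv_uniq. apply gmulgV. Qed.

Lemma ginv_one : e^-1 = e.
Proof. symmetry. apply inv_uniq. apply gmul1g. Qed.
End GL.

Lemma hom_one {G H} (SG : group G) (SH : group H) f : is_hom SG SH f -> f (gone SG) = gone SH.
Proof.
  intro hf. assert (E : f (gone SG) = gmul SH (f (gone SG)) (f (gone SG))).
  { rewrite <- hf, gmul1g. reflexivity. }
  transitivity (gmul SH (ginv SH (f (gone SG))) (gmul SH (f (gone SG)) (f (gone SG)))).
  - rewrite gKl. reflexivity.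
  - rewrite <- E. apply gmulVg.
Qed.

Lemma hom_inv {G H} (SG : group G) (SH : group H) f x : is_hom SG SH f -> f (ginv SG x) = ginv SH (f x).
Proof.
  intro hf. apply inv_uniq. rewrite <- hf, gmulVg. apply (hom_one SG SH f hf).
Qed.

Record mat := Mat { e11 : Z; e12 : Z; e21 : Z; e22 : Z }.
Definition mmul (A B : mat) := Mat (e11 A*e11 B + e12 A*e21 B) (e11 A*e12 B + e12 A*e22 B)
  (e21 A*e11 B + e22 A*e21 B) (e21 A*e12 B + e22 A*e22 B).
Definition madj (A : mat) := Mat (e22 A) (- e12 A) (- e21 A) (e11 A).
Definition mdet (A : mat) := e11 A * e22 A - e12 A * e21 A.
Definition mtr (A : mat) := e11 A + e22 A.
Definition mI := Mat 1 0 0 1.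
Definition msub (A B : mat) := Mat (e11 A - e11 B) (e12 A - e12 B) (e21 A - e21 B) (e22 A - e22 B).
Definition mneg (A : mat) := Mat (- e11 A) (- e12 A) (- e21 A) (- e22 A).

Lemma mdet_mul A B : mdet (mmul A B) = mdet A * mdet B.
Proof. destruct A, B; unfold mdet, mmul; simpl; ring. Qed.
Lemma mdet_adj A : mdet (madj A) = mdet A.
Proof. destruct A; unfold mdet, madj; simpl; ring. Qed.

Definition SL := { A : mat | mdet A = 1 }.
Lemma sl_eq (X Y : SL) : proj1_sig X = proj1_sig Y -> X = Y.
Proof. destruct X as [x hx], Y as [y hy]; simpl; intros ->. f_equal. apply proof_irrelevance. Qed.

Definition slmul (X Y : SL) : SL := exist _ (mmul (proj1_sig X) (proj1_sig Y))
  (eq_trans (mdet_mul _ _) (f_equal2 Z.mul (proj2_sig X) (proj2_sig Y))).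
Definition slinv (X : SL) : SL := exist _ (madj (proj1_sig X)) (eq_trans (mdet_adj _) (proj2_sig X)).
Definition slone : SL := exist _ mI eq_refl.

Definition SLg : group SL.
Proof.
  refine (Group SL slmul slinv slone _ _ _).
  - intros [x hx] [y hy] [z hz]; apply sl_eq; simpl; destruct x, y, z; unfold mmul; simpl; f_equal; ring.
  - intros [x hx]; apply sl_eq; cbn [proj1_sig slmul slone]; destruct x; unfold mmul, mI; cbn [e11 e12 e21 e22]; f_equal; ring.
  - intros [x hx]; apply sl_eq; cbn [proj1_sig slmul slone slinv]; destruct x; unfold mmul, mI, mdet, madj in *; cbn [e11 e12 e21 e22] in *; f_equal; nia.
Defined.
Open Scope Z_scope.

Definition lc (A B : mat) (x0 x1 x2 x3 : Z) : mat :=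
  let C := mmul A B in
  Mat (x0 + x1*e11 A + x2*e11 B + x3*e11 C) (x1*e12 A + x2*e12 B + x3*e12 C)
      (x1*e21 A + x2*e21 B + x3*e21 C) (x0 + x1*e22 A + x2*e22 B + x3*e22 C).

Lemma lc_mul A B x0 x1 x2 x3 y0 y1 y2 y3 :
  let tA := mtr A in let tB := mtr B in let s := mtr (mmul A B) in
  let dA := mdet A in let dB := mdet B in
  mmul (lc A B x0 x1 x2 x3) (lc A B y0 y1 y2 y3) =
  lc A B
   (x0*y0 - x1*y1*dA + x2*y1*(s - tA*tB) - x2*y2*dB - x2*y3*tA*dB - x3*y1*tB*dA - x3*y3*dA*dB)
   (x0*y1 + x1*y0 + x1*y1*tA + x2*y1*tB + x2*y3*dB + x3*y1*s - x3*y2*dB)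
   (x0*y2 + x2*y0 + x2*y1*tA + x2*y2*tB - x1*y3*dA + x2*y3*s + x3*y1*dA)
   (x0*y3 + x3*y0 + x1*y2 + x1*y3*tA - x2*y1 + x3*y2*tB + x3*y3*s).
Proof. destruct A as [a1 a2 a3 a4], B as [b1 b2 b3 b4]; unfold lc, mmul, mtr, mdet; cbn [e11 e12 e21 e22]; f_equal; ring. Qed.

Lemma lc_adj A B x0 x1 x2 x3 :
  madj (lc A B x0 x1 x2 x3) = lc A B (mtr (lc A B x0 x1 x2 x3) - x0) (-x1) (-x2) (-x3).
Proof. destruct A as [a1 a2 a3 a4], B as [b1 b2 b3 b4]; unfold lc, madj, mmul, mtr; cbn [e11 e12 e21 e22]; f_equal; ring. Qed.

Definition comm (X Y : mat) := msub (mmul X Y) (mmul Y X).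

Lemma comm_det A B x0 x1 x2 x3 y0 y1 y2 y3 :
  let p := x1*y2 - x2*y1 in let q := x1*y3 - x3*y1 in let r := x2*y3 - x3*y2 in
  let P := Mat (p + q*e11 A) (q*e12 A) (q*e21 A) (p + q*e22 A) in
  mdet (comm (lc A B x0 x1 x2 x3) (lc A B y0 y1 y2 y3)) =
  mdet (comm A B) * (mdet P + r*r*mdet B - r * mtr (mmul B P)).
Proof. destruct A as [a1 a2 a3 a4], B as [b1 b2 b3 b4]; unfold comm, lc, msub, mmul, mtr, mdet; cbn [e11 e12 e21 e22]; ring. Qed.

Lemma comm_det_tr A B :
  - mdet (comm A B) = mtr A * mtr A * mdet B + mtr B * mtr B * mdet A + mtr (mmul A B) * mtr (mmul A B)
     - mtr A * mtr B * mtr (mmul A B) - 4 * mdet A * mdet B.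
Proof. destruct A as [a1 a2 a3 a4], B as [b1 b2 b3 b4]; unfold comm, msub, mmul, mtr, mdet; cbn [e11 e12 e21 e22]; ring. Qed.

Lemma tr_conj X X' H : mmul X' H = mmul H X -> mdet H = 1 -> mtr X' = mtr X.
Proof.
  intros E hH.
  assert (E1 : mmul (mmul X' H) (madj H) = X').
  { destruct X' as [a1 a2 a3 a4], H as [h1 h2 h3 h4]; unfold mdet in hH; cbn [e11 e12 e21 e22] in hH.
    transitivity (Mat (a1*(h1*h4-h2*h3)) (a2*(h1*h4-h2*h3)) (a3*(h1*h4-h2*h3)) (a4*(h1*h4-h2*h3))).
    - unfold mmul, madj; cbn [e11 e12 e21 e22]; f_equal; ring.
    - rewrite hH; f_equal; ring. }
  assert (E2 : mtr (mmul (mmul H X) (madj H)) = mdet H * mtr X).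
  { destruct X as [a1 a2 a3 a4], H as [h1 h2 h3 h4]; unfold mmul, madj, mdet, mtr; cbn [e11 e12 e21 e22]; ring. }
  rewrite <- E1, E, E2, hH. ring.
Qed.
Open Scope Z_scope.

Definition subgen {G} (SG : group G) (c d : G) : group {x : G | in_gen SG c d x}.
Proof.
  refine (Group _ (fun x y => exist _ (gmul SG (proj1_sig x) (proj1_sig y)) (gen_mul _ _ _ _ _ (proj2_sig x) (proj2_sig y)))
                  (fun x => exist _ (ginv SG (proj1_sig x)) (gen_inv _ _ _ _ (proj2_sig x)))
                  (exist _ (gone SG) (gen_one _ _ _)) _ _ _).
  - intros [x hx] [y hy] [z hz]; simpl. apply eq_sig_hprop; [intros; apply proof_irrelevance|]. apply gmulA.
  - intros [x hx]; simpl. apply eq_sig_hprop; [intros; apply proof_irrelevance|]. apply gmul1g.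
  - intros [x hx]; simpl. apply eq_sig_hprop; [intros; apply proof_irrelevance|]. apply gmulVg.
Defined.

Lemma trefoil_gen {G} (SG : group G) c d : trefoil_presentation SG c d -> forall x, in_gen SG c d x.
Proof.
  intros [hrel hU].
  destruct (hU _ (subgen SG c d) (exist _ c (gen_a _ _ _)) (exist _ d (gen_b _ _ _))) as [[f [hf [fc fd]]] _].
  { apply eq_sig_hprop; [intros; apply proof_irrelevance|]. simpl. exact hrel. }
  destruct (hU _ SG c d hrel) as [_ hu].
  intro x.
  assert (E : x = proj1_sig (f x)).
  { apply (hu (fun x => x) (fun x => proj1_sig (f x))).
    - intros a b; reflexivity.
    - intros a b; rewrite hf; reflexivity.
    - rewrite fc; reflexivity.
    - rewrite fd; reflexivity. }
  rewrite E. apply proj2_sig.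
Qed.

Definition Smat := Mat 0 (-1) 1 0.
Definition Dmat := Mat 1 (-1) 1 0.
Definition Sm : SL := exist _ Smat eq_refl.
Definition Dm : SL := exist _ Dmat eq_refl.
Lemma SD_rel : gmul SLg Sm Sm = gmul SLg Dm (gmul SLg Dm Dm).
Proof. apply sl_eq. reflexivity. Qed.

Lemma sq_cases (t : Z) : t * t = 4 \/ (t*t <> 6 /\ t*t <> 2).
Proof.
  assert (H : t = -2 \/ t = -1 \/ t = 0 \/ t = 1 \/ t = 2 \/ 3 <= t \/ t <= -3) by lia.
  destruct H as [->|[->|[->|[->|[->|[H|H]]]]]]; try (right; lia); try (left; lia); right; nia.
Qed.

Section Main.
Context {G : Type} (SG : group G) (c d : G) (f : G -> SL)
  (hf : is_hom SG SLg f) (fc : f c = Sm) (fd : f d = Dm)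
  (hrel : gmul SG c c = gmul SG d (gmul SG d d))
  (hgen : forall x, in_gen SG c d x).

Definition R x := proj1_sig (f x).
Lemma R_mul x y : R (gmul SG x y) = mmul (R x) (R y).
Proof. unfold R. rewrite hf. reflexivity. Qed.
Lemma R_one : R (gone SG) = mI.
Proof. unfold R. rewrite (hom_one _ _ f hf). reflexivity. Qed.
Lemma R_inv x : R (ginv SG x) = madj (R x).
Proof. unfold R. rewrite (hom_inv _ _ f x hf). reflexivity. Qed.
Lemma R_det x : mdet (R x) = 1.
Proof. unfold R. apply proj2_sig. Qed.
Lemma R_c : R c = Smat.
Proof. unfold R; rewrite fc; reflexivity. Qed.
Lemma R_d : R d = Dmat.
Proof. unfold R; rewrite fd; reflexivity. Qed.

Lemma span_lemma a b : forall x, in_gen SG a b x ->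
  exists x0 x1 x2 x3, R x = lc (R a) (R b) x0 x1 x2 x3.
Proof.
  induction 1 as [| | |x y _ [x0 [x1 [x2 [x3 Hx]]]] _ [y0 [y1 [y2 [y3 Hy]]]] | x _ [x0 [x1 [x2 [x3 Hx]]]]].
  - exists 1, 0, 0, 0. rewrite R_one. destruct (R a) as [a1 a2 a3 a4], (R b) as [b1 b2 b3 b4]; unfold lc, mI, mmul; cbn [e11 e12 e21 e22]; f_equal; ring.
  - exists 0, 1, 0, 0. destruct (R a) as [a1 a2 a3 a4], (R b) as [b1 b2 b3 b4]; unfold lc, mmul; cbn [e11 e12 e21 e22]; f_equal; ring.
  - exists 0, 0, 1, 0. destruct (R a) as [a1 a2 a3 a4], (R b) as [b1 b2 b3 b4]; unfold lc, mmul; cbn [e11 e12 e21 e22]; f_equal; ring.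
  - rewrite R_mul, Hx, Hy, lc_mul. eauto.
  - rewrite R_inv, Hx, lc_adj. eauto.
Qed.

Lemma partA alpha beta : conjugate SG alpha beta -> generates SG alpha beta ->
  mtr (R alpha) * mtr (R alpha) = 4.
Proof.
  intros [g Hb] Hgen.
  destruct (span_lemma alpha beta c (Hgen c)) as [x0 [x1 [x2 [x3 Hx]]]].
  destruct (span_lemma alpha beta d (Hgen d)) as [y0 [y1 [y2 [y3 Hy]]]].
  pose proof (comm_det (R alpha) (R beta) x0 x1 x2 x3 y0 y1 y2 y3) as E.
  cbv zeta in E. rewrite <- Hx, <- Hy, R_c, R_d in E.
  change (mdet (comm Smat Dmat)) with (-1) in E.
  set (M := mdet (comm (R alpha) (R beta))) in *.
  set (Q := (_ + _ - _)) in E.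
  assert (HM : M = 1 \/ M = -1).
  { apply (Z.eq_mul_1 M (-Q)). lia. }
  assert (Ht : mtr (R beta) = mtr (R alpha)).
  { apply (tr_conj _ _ (R g)); [| apply R_det].
    rewrite <- !R_mul. f_equal. rewrite Hb, <- gmulA, gmulVg, gmulg1. reflexivity. }
  pose proof (comm_det_tr (R alpha) (R beta)) as E2.
  rewrite Ht, !R_det in E2. fold M in E2.
  set (t := mtr (R alpha)) in *. set (s := mtr (mmul (R alpha) (R beta))) in *.
  assert (Hf : (s - 2) * (s + 2 - t*t) = - M) by (rewrite E2; ring).
  assert (Hu : (s - 2) * ((s + 2 - t*t) * -M) = 1).
  { rewrite Z.mul_assoc, Hf. destruct HM as [-> | ->]; reflexivity. }
  assert (Hs : s = 3 \/ s = 1) by (destruct (Z.eq_mul_1 _ _ Hu); lia).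
  destruct HM as [HM | HM]; rewrite HM in Hf; destruct Hs as [Hs | Hs]; rewrite Hs in Hf; destruct (sq_cases t) as [? | [? ?]]; auto; lia.
Qed.
End Main.
Open Scope Z_scope.

Section PartB.
Context {G : Type} (SG : group G) (c d : G) (f : G -> SL)
  (hf : is_hom SG SLg f) (fc : f c = Sm) (fd : f d = Dm)
  (hrel : gmul SG c c = gmul SG d (gmul SG d d))
  (hgen : forall x, in_gen SG c d x).

Local Notation m := (gmul SG).
Local Notation iv := (ginv SG).
Local Notation one := (gone SG).
Local Notation R := (R f).

Ltac gnorm := repeat rewrite <- (gmulA SG); repeat (rewrite (gmul1g SG) || rewrite (gmulg1 SG)).

Definition z := m c c.
Definition Zgen := in_gen SG z z.

Lemma comm_inv a b : m a b = m b a -> m a (iv b) = m (iv b) a.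
Proof.
  intro H. transitivity (m (iv b) (m (m b a) (iv b))).
  - rewrite <- gmulA, gKl. reflexivity.
  - rewrite <- H. gnorm. rewrite gmulgV, gmulg1. reflexivity.
Qed.

Lemma comm_mul a x y : m a x = m x a -> m a y = m y a -> m a (m x y) = m (m x y) a.
Proof. intros Hx Hy. rewrite gmulA, Hx, <- gmulA, Hy, gmulA. reflexivity. Qed.

Lemma z_central x : m z x = m x z.
Proof.
  induction (hgen x) as [| | |x y _ Hx _ Hy|x _ Hx].
  - rewrite gmul1g, gmulg1. reflexivity.
  - unfold z. gnorm. reflexivity.
  - unfold z. rewrite hrel. gnorm. reflexivity.
  - apply comm_mul; assumption.
  - apply comm_inv; assumption.
Qed.

Lemma Zgen_central w : Zgen w -> forall x, m w x = m x w.
Proof.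
  intros Hw x. induction Hw as [| | |u v _ Hu _ Hv|u _ Hu].
  - rewrite gmul1g, gmulg1. reflexivity.
  - apply z_central.
  - apply z_central.
  - rewrite <- gmulA, Hv, gmulA, Hu, gmulA. reflexivity.
  - symmetry. apply comm_inv. symmetry. assumption.
Qed.

Lemma swapZ w x y : Zgen w -> m x (m w y) = m w (m x y).
Proof. intro Hw. rewrite gmulA, <- (Zgen_central w Hw x), gmulA. reflexivity. Qed.

Lemma R_Zgen w : Zgen w -> R w = mI \/ R w = mneg mI.
Proof.
  induction 1 as [| | |u v _ Hu _ Hv|u _ Hu].
  - left. apply R_one. exact hf.
  - right. unfold z. rewrite (R_mul SG f hf), (R_c c f fc). reflexivity.
  - right. unfold z. rewrite (R_mul SG f hf), (R_c c f fc). reflexivity.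
  - rewrite (R_mul SG f hf). destruct Hu as [-> | ->], Hv as [-> | ->]; [left|right|right|left]; reflexivity.
  - rewrite (R_inv SG f hf). destruct Hu as [-> | ->]; [left|right]; reflexivity.
Qed.

Lemma tr_Zgen w x : Zgen w -> mtr (R (m w x)) * mtr (R (m w x)) = mtr (R x) * mtr (R x).
Proof.
  intro Hw. rewrite (R_mul SG f hf). destruct (R_Zgen w Hw) as [-> | ->];
  destruct (R x) as [a1 a2 a3 a4]; unfold mtr, mmul, mneg, mI; cbn [e11 e12 e21 e22]; ring.
Qed.

Definition dp (j : nat) := match j with 0%nat => one | 1%nat => d | _ => m d d end.
Definition blk (b : bool) := if b then m c (m d d) else m c d.
Fixpoint evalB (B : list bool) := match B with nil => one | b :: l => m (blk b) (evalB l) end.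
Definition cp (e : bool) := if e then c else one.

Definition F x := exists w j B e, Zgen w /\ (j < 3)%nat /\ x = m w (m (dp j) (m (evalB B) (cp e))).

Lemma F_z w y : Zgen w -> F y -> F (m w y).
Proof.
  intros Hw [w' [j [B [e [Hw' [Hj ->]]]]]]. exists (m w w'), j, B, e.
  split; [apply gen_mul; assumption|]. split; [assumption|]. gnorm. reflexivity.
Qed.

Lemma Zz : Zgen z.
Proof. apply gen_a. Qed.

Lemma F_c y : F y -> F (m c y).
Proof.
  intros [w [j [B [e [Hw [Hj ->]]]]]]. rewrite (swapZ w _ _ Hw).
  destruct j as [|[|[|j]]]; [| | |lia]; simpl dp.
  - destruct B as [|b B'].
    + destruct e.
      * exists (m w z), 0%nat, nil, false. split; [apply gen_mul; [assumption|apply Zz]|]. split; [lia|].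
        simpl. unfold z. gnorm. reflexivity.
      * exists w, 0%nat, nil, true. split; [assumption|]. split; [lia|]. simpl. gnorm. reflexivity.
    + exists (m w z), (if b then 2 else 1)%nat, B', e. split; [apply gen_mul; [assumption|apply Zz]|].
      split; [destruct b; lia|]. simpl. unfold z. destruct b; simpl; gnorm; reflexivity.
  - exists w, 0%nat, (false :: B), e. split; [assumption|]. split; [lia|]. simpl. gnorm. reflexivity.
  - exists w, 0%nat, (true :: B), e. split; [assumption|]. split; [lia|]. simpl. gnorm. reflexivity.
Qed.

Lemma F_d y : F y -> F (m d y).
Proof.
  intros [w [j [B [e [Hw [Hj ->]]]]]]. rewrite (swapZ w _ _ Hw).
  destruct j as [|[|[|j]]]; [| | |lia]; simpl dp.
  - exists w, 1%nat, B, e. split; [assumption|]. split; [lia|]. simpl. gnorm. reflexivity.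
  - exists w, 2%nat, B, e. split; [assumption|]. split; [lia|]. simpl. gnorm. reflexivity.
  - exists (m w z), 0%nat, B, e. split; [apply gen_mul; [assumption|apply Zz]|]. split; [lia|].
    simpl. unfold z. rewrite hrel. gnorm. reflexivity.
Qed.

Lemma c_inv : iv c = m (iv z) c.
Proof. unfold z. rewrite ginv_mul, <- gmulA, gmulVg, gmulg1. reflexivity. Qed.
Lemma d_inv : iv d = m (iv z) (m d d).
Proof. unfold z. rewrite hrel, !ginv_mul. gnorm. rewrite gKl, gmulVg, gmulg1. reflexivity. Qed.

Lemma F_all x : F x.
Proof.
  assert (P : (forall y, F y -> F (m x y)) /\ (forall y, F y -> F (m (iv x) y))).
  { induction (hgen x) as [| | |x1 x2 _ [H1 H1'] _ [H2 H2']|x1 _ [H1 H1']].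
    - split; intros y Hy.
      + rewrite gmul1g. exact Hy.
      + rewrite ginv_one, gmul1g. exact Hy.
    - split; intros y Hy.
      + apply F_c. exact Hy.
      + rewrite c_inv, <- gmulA. apply F_z; [apply gen_inv, Zz|]. apply F_c. exact Hy.
    - split; intros y Hy.
      + apply F_d. exact Hy.
      + rewrite d_inv, <- gmulA. apply F_z; [apply gen_inv, Zz|]. rewrite <- gmulA. apply F_d, F_d. exact Hy.
    - split; intros y Hy.
      + rewrite <- gmulA. apply H1, H2, Hy.
      + rewrite ginv_mul, <- gmulA. apply H2', H1', Hy.
    - split; intros y Hy.
      + apply H1', Hy.
      + rewrite ginv_inv. apply H1, Hy. }
  rewrite <- (gmulg1 SG x). apply (proj1 P).
  exists one, 0%nat, nil, false. split; [apply gen_one|]. split; [lia|]. simpl. gnorm. reflexivity.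
Qed.


Local Notation a := (meridian SG c d).
Local Notation lam := (longitude SG c d).
Definition Pg := in_gen SG a lam.

Lemma npow_Pg n : Pg (npow SG n a).
Proof. induction n; simpl; [apply gen_one | apply gen_mul; [apply gen_a | exact IHn]]. Qed.

Lemma z_Pg : Pg z.
Proof.
  assert (E : z = m lam (npow SG 6 a)).
  { unfold longitude, z. rewrite <- gmulA, gmulVg, gmulg1. reflexivity. }
  rewrite E. apply gen_mul; [apply gen_b | apply npow_Pg].
Qed.

Lemma Zgen_Pg w : Zgen w -> Pg w.
Proof. induction 1; [apply gen_one|apply z_Pg|apply z_Pg|apply gen_mul; assumption|apply gen_inv; assumption]. Qed.

Lemma cd_Pg : Pg (m c d).
Proof.
  assert (E : m c d = m z (iv a)).
  { unfold z, meridian. rewrite ginv_mul, ginv_inv. gnorm. rewrite gKr. reflexivity. }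
  rewrite E. apply gen_mul; [apply z_Pg | apply gen_inv, gen_a].
Qed.

Lemma cdd_conj : m c (m d d) = m c (m (m z a) (iv c)).
Proof.
  unfold meridian. gnorm. rewrite gmulgV, gmulg1. unfold z. rewrite hrel. gnorm.
  rewrite gmulgV, gmulg1. reflexivity.
Qed.

Lemma true_conj B : (forall b, In b B -> b = true) -> exists Y, Pg Y /\ evalB B = m c (m Y (iv c)).
Proof.
  induction B as [|b l IH]; intro H.
  - exists one. split; [apply gen_one|]. simpl. rewrite gmul1g, gmulgV. reflexivity.
  - destruct IH as [Y [HY E]]; [intros; apply H; right; assumption|].
    rewrite (H b (or_introl eq_refl)) in *. exists (m (m z a) Y). split.
    + apply gen_mul; [apply gen_mul; [apply z_Pg|apply gen_a]|exact HY].
    + simpl. rewrite E, cdd_conj. gnorm. rewrite gKl. reflexivity.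
Qed.

Lemma false_Pg B : (forall b, In b B -> b = false) -> Pg (evalB B).
Proof.
  induction B as [|b l IH]; intro H; simpl.
  - apply gen_one.
  - rewrite (H b (or_introl eq_refl)). apply gen_mul; [apply cd_Pg|]. apply IH. intros; apply H; right; assumption.
Qed.

Lemma evalB_app B b : evalB (B ++ b :: nil) = m (evalB B) (m (blk b) one).
Proof. induction B as [|b0 l IH]; simpl; [rewrite gmul1g; reflexivity|]. rewrite IH. gnorm. reflexivity. Qed.

Definition Gl x := mtr (R x) * mtr (R x) = 4 -> peripheral SG c d x.

Lemma Goal_conj h x x' : m h x = m x' h -> Gl x -> Gl x'.
Proof.
  intros E Gx Htr.
  assert (Ht : mtr (R x') = mtr (R x)).
  { apply (tr_conj _ _ (R h)); [| apply R_det]. rewrite <- !(R_mul SG f hf). rewrite E. reflexivity. }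
  rewrite Ht in Htr. destruct (Gx Htr) as [g [y [Hy Ex]]].
  exists (m h g), y. split; [exact Hy|].
  assert (E2 : x' = m (m h x) (iv h)) by (rewrite E, <- gmulA, gmulgV, gmulg1; reflexivity).
  rewrite E2, Ex, ginv_mul. gnorm. reflexivity.
Qed.

Lemma Goal_conj' h x x' : m h x = m x' h -> Gl x' -> Gl x.
Proof.
  intro E. apply (Goal_conj (iv h)).
  transitivity (m (iv h) (m (m x' h) (iv h))).
  - gnorm. rewrite gmulgV, gmulg1. reflexivity.
  - rewrite <- E. gnorm. rewrite gKl. reflexivity.
Qed.

Lemma R_blk_false : R (blk false) = Mat (-1) 0 1 (-1).
Proof. simpl. rewrite (R_mul SG f hf), (R_c c f fc), (R_d d f fd). reflexivity. Qed.
Lemma R_blk_true : R (blk true) = Mat (-1) 1 0 (-1).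
Proof. simpl. rewrite !(R_mul SG f hf), (R_c c f fc), (R_d d f fd). reflexivity. Qed.

Lemma evalB_shape B : exists a1 b1 c1 d1,
  (R (evalB B) = Mat a1 b1 c1 d1 \/ R (evalB B) = mneg (Mat a1 b1 c1 d1)) /\
  1 <= a1 /\ 1 <= d1 /\ b1 <= 0 /\ c1 <= 0 /\ (In true B -> b1 <= -1) /\ (In false B -> c1 <= -1).
Proof.
  induction B as [|b l IH].
  - exists 1, 0, 0, 1. simpl. rewrite (R_one SG f hf). split; [left; reflexivity|]. repeat split; try lia; intros [].
  - destruct IH as [a1 [b1 [c1 [d1 [Hs [H1 [H2 [H3 [H4 [H5 H6]]]]]]]]]].
    simpl. rewrite (R_mul SG f hf). destruct b.
    + rewrite R_blk_true. exists (a1 - c1), (b1 - d1), c1, d1.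
      split; [destruct Hs as [-> | ->]; [right|left]; unfold mmul, mneg; cbn [e11 e12 e21 e22]; f_equal; ring|].
      repeat split; try lia.
      * intros [Hf|Hf]; [discriminate|]. auto.
    + rewrite R_blk_false. exists a1, b1, (c1 - a1), (d1 - b1).
      split; [destruct Hs as [-> | ->]; [right|left]; unfold mmul, mneg; cbn [e11 e12 e21 e22]; f_equal; ring|].
      repeat split; try lia.
      * intros [Hf|Hf]; [discriminate|]. auto.
Qed.

Lemma pure w B : Zgen w -> Gl (m w (evalB B)).
Proof.
  intros Hw Htr. rewrite (tr_Zgen w _ Hw) in Htr.
  destruct (in_dec Bool.bool_dec true B) as [It | It].
  - destruct (in_dec Bool.bool_dec false B) as [If | If].
    + exfalso. destruct (evalB_shape B) as [a1 [b1 [c1 [d1 [Hs [H1 [H2 [H3 [H4 [H5 H6]]]]]]]]]].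
      specialize (H5 It). specialize (H6 If). pose proof (R_det f (evalB B)) as Hd.
      destruct Hs as [Hs|Hs]; rewrite Hs in Htr, Hd; unfold mtr, mdet, mneg in *; cbn [e11 e12 e21 e22] in *; nia.
    + assert (Ht : forall b, In b B -> b = true).
      { intros [] Hb; [reflexivity | contradiction]. }
      destruct (true_conj B Ht) as [Y [HY E]]. exists c, (m w Y). split.
      * apply gen_mul; [apply Zgen_Pg; exact Hw | exact HY].
      * rewrite E. rewrite <- (swapZ w c _ Hw). gnorm. reflexivity.
  - exists one, (m w (evalB B)). split.
    + apply gen_mul; [apply Zgen_Pg; exact Hw|]. apply false_Pg. intros [] Hb; [contradiction|reflexivity].
    + rewrite ginv_one, gmul1g, gmulg1. reflexivity.
Qed.

Lemma main_form B : forall w j e, Zgen w -> (j < 3)%nat ->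
  Gl (m w (m (dp j) (m (evalB B) (cp e)))).
Proof.
  induction B as [B IH] using (well_founded_induction (Wf_nat.well_founded_ltof _ (@length bool))).
  intros w j e Hw Hj.
  assert (Hwz : Zgen (m w z)) by (apply gen_mul; [exact Hw | apply Zz]).
  destruct e.
  - apply (Goal_conj' c _ (m w (m c (m (dp j) (evalB B))))).
    { rewrite (swapZ w c _ Hw). simpl cp. gnorm. reflexivity. }
    destruct j as [|[|[|j]]]; [| | |lia]; simpl dp.
    + destruct B as [|b B'].
      * intro Htr. exfalso. rewrite (tr_Zgen w _ Hw) in Htr. simpl evalB in Htr.
        rewrite !(R_mul SG f hf), (R_one SG f hf), (R_c c f fc) in Htr. vm_compute in Htr. discriminate.
      * assert (E : m w (m c (m one (evalB (b :: B')))) =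
                    m (m w z) (m (dp (if b then 2 else 1)) (m (evalB B') (cp false)))).
        { unfold z. destruct b; simpl; gnorm; reflexivity. }
        rewrite E. apply IH; [unfold Wf_nat.ltof; simpl; lia | exact Hwz | destruct b; lia].
    + assert (E : m w (m c (m d (evalB B))) = m w (evalB (false :: B))) by (simpl; gnorm; reflexivity).
      rewrite E. apply pure, Hw.
    + assert (E : m w (m c (m (m d d) (evalB B))) = m w (evalB (true :: B))) by (simpl; gnorm; reflexivity).
      rewrite E. apply pure, Hw.
  - simpl cp. destruct j as [|j'].
    + assert (E : m w (m (dp 0) (m (evalB B) one)) = m w (evalB B)) by (simpl; gnorm; reflexivity).
      rewrite E. apply pure, Hw.
    + assert (HB : B = nil \/ exists B0 b, B = B0 ++ b :: nil).
      { destruct B as [|b0 B1]; [left; reflexivity|right]. destruct (exists_last (l := b0 :: B1)) as [B0 [b Eb]]; [discriminate|]. eauto. }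
      destruct HB as [-> | [B0 [b ->]]].
      * intro Htr. exfalso. rewrite (tr_Zgen w _ Hw) in Htr. simpl evalB in Htr.
        destruct j' as [|[|j']]; [| | lia]; simpl dp in Htr;
        rewrite !(R_mul SG f hf), !(R_one SG f hf), (R_d d f fd) in Htr; vm_compute in Htr; discriminate.
      * apply (Goal_conj (dp (S j')) (m w (m (evalB B0) (m (blk b) (dp (S j')))))).
        { rewrite evalB_app, (swapZ w (dp (S j')) _ Hw). gnorm. reflexivity. }
        assert (Hl : (length B0 < length (B0 ++ b :: nil))%nat) by (rewrite length_app; simpl; lia).
        destruct j' as [|[|j']]; [| | lia]; destruct b.
        --
           assert (E : m w (m (evalB B0) (m (blk true) (dp 1))) = m (m w z) (m (dp 0) (m (evalB B0) (cp true)))).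
           { transitivity (m w (m (evalB B0) (m c z))).
             - simpl. unfold z. rewrite hrel. gnorm. reflexivity.
             - rewrite <- (z_central c), (gmulA SG (evalB B0) z c), <- (z_central (evalB B0)). simpl. gnorm. reflexivity. }
           rewrite E. apply IH; [exact Hl | exact Hwz | lia].
        --
           assert (E : m w (m (evalB B0) (m (blk false) (dp 1))) = m w (evalB (B0 ++ true :: nil))).
           { rewrite evalB_app. simpl. gnorm. reflexivity. }
           rewrite E. apply pure, Hw.
        --
           assert (E : m w (m (evalB B0) (m (blk true) (dp 2))) = m (m w z) (evalB (B0 ++ false :: nil))).
           { transitivity (m w (m (evalB B0) (m c (m z d)))).
             - simpl. unfold z. rewrite hrel. gnorm. reflexivity.
             - rewrite evalB_app. rewrite (gmulA SG c z d), <- (z_central c). gnorm.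
               rewrite (gmulA SG (evalB B0) z), <- (z_central (evalB B0)). simpl. gnorm. reflexivity. }
           rewrite E. apply pure, Hwz.
        --
           assert (E : m w (m (evalB B0) (m (blk false) (dp 2))) = m (m w z) (m (dp 0) (m (evalB B0) (cp true)))).
           { transitivity (m w (m (evalB B0) (m c z))).
             - simpl. unfold z. rewrite hrel. gnorm. reflexivity.
             - rewrite <- (z_central c), (gmulA SG (evalB B0) z c), <- (z_central (evalB B0)). simpl. gnorm. reflexivity. }
           rewrite E. apply IH; [exact Hl | exact Hwz | lia].
Qed.

End PartB.
Open Scope Z_scope.

Lemma gen_swap {G} (SG : group G) a b x : in_gen SG a b x -> in_gen SG b a x.
Proof. induction 1; [apply gen_one|apply gen_b|apply gen_a|apply gen_mul; assumption|apply gen_inv; assumption]. Qed.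

Lemma conj_sym {G} (SG : group G) x y : conjugate SG x y -> conjugate SG y x.
Proof.
  intros [g ->]. exists (ginv SG g). rewrite ginv_inv.
  rewrite <- !(gmulA SG). rewrite gKl, gmulVg, gmulg1. reflexivity.
Qed.

Theorem mainTheorem9 (G : Type) (SG : group G) (c d : G)
  (hG : trefoil_presentation SG c d) (alpha beta : G) :
  conjugate SG alpha beta ->
  generates SG alpha beta ->
  peripheral SG c d alpha /\ peripheral SG c d beta.
Proof.
  intros Hc Hg.
  pose proof (trefoil_gen SG c d hG) as hgen.
  destruct hG as [hrel hU].
  destruct (hU _ SLg Sm Dm SD_rel) as [[f [hf [fc fd]]] _].
  assert (K : forall x, mtr (R f x) * mtr (R f x) = 4 -> peripheral SG c d x).
  { intros x Hx. destruct (F_all SG c d hrel hgen x) as [w [j [B [e [Hw [Hj ->]]]]]].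
    apply (main_form SG c d f hf fc fd hrel hgen B w j e Hw Hj). exact Hx. }
  split; apply K.
  - apply (partA SG c d f hf fc fd alpha beta Hc Hg).
  - apply (partA SG c d f hf fc fd beta alpha (conj_sym SG _ _ Hc)).
    intro x. apply gen_swap, Hg.
Qed.
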